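(* Let $C_i, C_j, C_k$ be three pairwise disjoint closed circular discs in $\mathbb{R}^2$ with non-collinear centers $c_i,c_j,c_k$, and let $F$ be their feasible region. Then every point $q\in F$ illuminates every point of each of the three objective arcs: for every point $p$ on the objective arc of any of the three discs, the open segment from $q$ to $p$ does not meet the interior of $C_i$, $C_j$ or $C_k$.
   Context: For two disjoint closed discs $C_a, C_b$ with centers $c_a,c_b$, let $p_a, p_b$ be the points where the segment $\overline{c_ac_b}$ meets the boundary circles of $C_a$ and $C_b$ respectively, and let $l_a, l_b$ be the lines through $p_a$, $p_b$ perpendicular to $\overline{c_ac_b}$. The slab $S_{a,b}$ is the closed region between the parallel lines $l_a$ and $l_b$. For three pairwise disjoint discs $C_i,C_j,C_k$, the feasible region is $S_{i,j}\cap S_{j,k}\cap S_{i,k}$. Objective arcs: on each disc, say $C_i$, the edges $\overline{c_ic_j}$ and $\overline{c_ic_k}$ of the triangle $c_ic_jc_k$ meet the boundary circle of $C_i$ in two points; the objective arc of $C_i$ is the arc of the boundary circle of $C_i$ with these two points as endpoints whose length is less than half the circumference (the arc facing the interior of the triangle). Objective arcs of $C_j$, $C_k$ are defined analogously. *)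

(* Defs.v *)
From Stdlib Require Import Reals Lra.
Open Scope R_scope.

Definition pt := (R * R)%type.

Definition padd (a b : pt) : pt := (fst a + fst b, snd a + snd b).
Definition psub (a b : pt) : pt := (fst a - fst b, snd a - snd b).
Definition pscale (t : R) (a : pt) : pt := (t * fst a, t * snd a).
Definition dot (a b : pt) : R := fst a * fst b + snd a * snd b.
Definition cross (a b : pt) : R := fst a * snd b - snd a * fst b.
Definition pnorm (a : pt) : R := sqrt (dot a a).
Definition dist (a b : pt) : R := pnorm (psub a b).

Definition in_disc (c : pt) (r : R) (x : pt) : Prop := dist x c <= r.
Definition in_disc_interior (c : pt) (r : R) (x : pt) : Prop := dist x c < r.
Definition on_circle (c : pt) (r : R) (x : pt) : Prop := dist x c = r.

Definition discs_disjoint (ca : pt) (ra : R) (cb : pt) (rb : R) : Prop :=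
  ~ (exists x, in_disc ca ra x /\ in_disc cb rb x).

Definition collinear (a b c : pt) : Prop := cross (psub b a) (psub c a) = 0.

(* p_a : the point where segment c_a c_b meets the boundary circle of C_a. *)
Definition boundary_point (ca : pt) (ra : R) (cb : pt) : pt :=
  padd ca (pscale (ra / dist cb ca) (psub cb ca)).

(* Slab S_{a,b}: closed region between the lines through p_a and p_b
   perpendicular to c_a c_b. *)
Definition slab (ca : pt) (ra : R) (cb : pt) (rb : R) (x : pt) : Prop :=
  let v := psub cb ca in
  let pa := boundary_point ca ra cb in
  let pb := boundary_point cb rb ca in
  dot (psub x pa) v * dot (psub x pb) v <= 0.

Definition feasible (ci : pt) (ri : R) (cj : pt) (rj : R) (ck : pt) (rk : R)
  (x : pt) : Prop :=
  slab ci ri cj rj x /\ slab cj rj ck rk x /\ slab ci ri ck rk x.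

(* Objective arc of the disc (ca, ra) w.r.t. the two other centers cb, cc:
   the minor arc of the boundary circle between the points where the edges
   c_a c_b and c_a c_c meet it, i.e. the boundary points lying in the
   (convex, angle < pi) cone at c_a spanned by c_b - c_a and c_c - c_a. *)
Definition objective_arc (ca : pt) (ra : R) (cb cc : pt) (p : pt) : Prop :=
  on_circle ca ra p /\
  exists a b : R, 0 <= a /\ 0 <= b /\
    psub p ca = padd (pscale a (psub cb ca)) (pscale b (psub cc ca)).

Definition on_open_segment (q p x : pt) : Prop :=
  exists t : R, 0 < t < 1 /\ x = padd q (pscale t (psub p q)).

(* Main.v *)
Require Import Defs.
From Stdlib Require Import Reals Lra Psatz.
Import Defs.
Open Scope R_scope.

Lemma dot_nonneg (w : pt) : 0 <= dot w w.
Proof. destruct w as [a b]; unfold dot; simpl; nra. Qed.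

Lemma pnorm_sq (w : pt) : pnorm w * pnorm w = dot w w.
Proof. unfold pnorm; apply sqrt_sqrt, dot_nonneg. Qed.

Lemma pnorm_le (w : pt) (r : R) : 0 <= r -> dot w w <= r * r -> pnorm w <= r.
Proof. intros Hr H. unfold pnorm. rewrite <- (sqrt_square r Hr). now apply sqrt_le_1_alt. Qed.

Lemma pnorm_ge (w : pt) (r : R) : 0 <= r -> r * r <= dot w w -> r <= pnorm w.
Proof. intros Hr H. unfold pnorm. rewrite <- (sqrt_square r Hr). now apply sqrt_le_1_alt. Qed.

Lemma cs (u v : pt) : dot u v <= pnorm u * pnorm v.
Proof.
  pose proof (pnorm_sq u). pose proof (pnorm_sq v).
  assert (0 <= pnorm u) by apply sqrt_pos. assert (0 <= pnorm v) by apply sqrt_pos.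
  assert (dot u v * dot u v <= dot u u * dot v v).
  { destruct u as [a b], v as [c d]; unfold dot; simpl.
    pose proof (Rle_0_sqr (a*d - b*c)). unfold Rsqr in *.
    replace ((a * a + b * b) * (c * c + d * d)) with ((a * c + b * d) * (a * c + b * d) + (a*d - b*c)*(a*d-b*c)) by ring. lra. }
  destruct (Rle_dec (dot u v) 0). nra.
  assert (0 <= pnorm u * pnorm v) by nra.
  nra.
Qed.

Lemma dist_sym a b : dist a b = dist b a.
Proof. unfold dist, pnorm, psub, dot; simpl; f_equal; ring. Qed.

Lemma disj_far ca ra cb rb : 0 < ra -> 0 < rb -> discs_disjoint ca ra cb rb ->
  ra + rb < dist cb ca.
Proof.
  intros Ha Hb Hd. set (d := dist cb ca).
  assert (Hd0 : 0 <= d) by apply sqrt_pos.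
  assert (Hdd : d * d = dot (psub cb ca) (psub cb ca)) by apply pnorm_sq.
  destruct (Rlt_le_dec (ra + rb) d) as [h|h]; [exact h|exfalso; apply Hd].
  destruct (Rle_dec d ra).
  - exists cb. split; unfold in_disc. exact r.
    unfold dist. apply pnorm_le; [lra|]. destruct cb; unfold psub, dot; simpl; nra.
  - exists (boundary_point ca ra cb). unfold in_disc, boundary_point. fold d.
    assert (d <> 0) by lra.
    destruct ca as [a1 a2], cb as [b1 b2]. unfold psub, dot in Hdd; simpl in Hdd.
    split; unfold dist; [apply pnorm_le|apply pnorm_le]; try lra;
    unfold padd, pscale, psub, dot; simpl.
    + replace ((a1 + ra / d * (b1 - a1) - a1) * (a1 + ra / d * (b1 - a1) - a1) +
       (a2 + ra / d * (b2 - a2) - a2) * (a2 + ra / d * (b2 - a2) - a2))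
       with ((ra/d)*(ra/d) * ((b1 - a1) * (b1 - a1) + (b2 - a2) * (b2 - a2))) by ring.
      rewrite <- Hdd. field_simplify; lra.
    + replace ((a1 + ra / d * (b1 - a1) - b1) * (a1 + ra / d * (b1 - a1) - b1) +
       (a2 + ra / d * (b2 - a2) - b2) * (a2 + ra / d * (b2 - a2) - b2))
       with ((ra/d - 1)*(ra/d - 1) * ((b1 - a1) * (b1 - a1) + (b2 - a2) * (b2 - a2))) by ring.
      rewrite <- Hdd.
      replace ((ra / d - 1) * (ra / d - 1) * (d * d)) with ((ra - d)*(ra-d)) by (field; lra).
      nra.
Qed.

Definition SI (ca : pt) (ra : R) (cb : pt) (q : pt) : Prop :=
  ra * dist cb ca <= dot (psub q ca) (psub cb ca).

Lemma slab_SI ca ra cb rb q : 0 < ra -> 0 < rb -> ra + rb < dist cb ca ->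
  slab ca ra cb rb q -> SI ca ra cb q /\ SI cb rb ca q.
Proof.
  intros Ha Hb Hf Hs. unfold SI. rewrite (dist_sym ca cb).
  unfold slab, boundary_point in Hs. rewrite (dist_sym ca cb) in Hs.
  set (d := dist cb ca) in *.
  assert (Hdd : d * d = dot (psub cb ca) (psub cb ca)) by apply pnorm_sq.
  assert (d <> 0) by lra.
  destruct ca as [a1 a2], cb as [b1 b2], q as [q1 q2].
  unfold psub, padd, pscale, dot in *; simpl in *.
  set (A := (q1 - a1) * (b1 - a1) + (q2 - a2) * (b2 - a2)) in *.
  set (B := (q1 - b1) * (a1 - b1) + (q2 - b2) * (a2 - b2)).
  assert (E1 : (q1 - (a1 + ra / d * (b1 - a1))) * (b1 - a1) +
      (q2 - (a2 + ra / d * (b2 - a2))) * (b2 - a2) = A - ra * d).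
  { replace (ra * d) with (ra / d * (d * d)) by (field; lra). rewrite Hdd. unfold A. ring. }
  assert (E2 : (q1 - (b1 + rb / d * (a1 - b1))) * (b1 - a1) +
      (q2 - (b2 + rb / d * (a2 - b2))) * (b2 - a2) = rb * d - B).
  { replace (rb * d) with (rb / d * (d * d)) by (field; lra). rewrite Hdd. unfold B. ring. }
  rewrite E1, E2 in Hs.
  assert (HAB : A + B = d * d) by (rewrite Hdd; unfold A, B; ring).
  assert (0 < d) by lra.
  assert (A - ra * d + (B - rb * d) > 0) by nra.
  split; nra.
Qed.

Lemma own_disc ca ra cb cc q p x : 0 < ra ->
  SI ca ra cb q -> SI ca ra cc q -> objective_arc ca ra cb cc p ->
  on_open_segment q p x -> ra <= dist x ca.
Proof.
  intros Ha S1 S2 [Hp [a [b [Ha0 [Hb0 Hw]]]]] [t [Ht Hx]].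
  unfold SI, on_circle in *.
  set (db := dist cb ca) in *. set (dc := dist cc ca) in *.
  assert (C1 : dot (psub p ca) (psub cb ca) <= ra * db).
  { rewrite <- Hp. apply cs. }
  assert (C2 : dot (psub p ca) (psub cc ca) <= ra * dc).
  { rewrite <- Hp. apply cs. }
  assert (Hpp : dot (psub p ca) (psub p ca) = ra * ra).
  { rewrite <- Hp. symmetry. apply pnorm_sq. }
  assert (E : dot (psub p ca) (psub p ca) =
     a * dot (psub p ca) (psub cb ca) + b * dot (psub p ca) (psub cc ca)).
  { rewrite Hw at 2. destruct p, ca, cb, cc; unfold dot, padd, pscale, psub; simpl; ring. }
  assert (E2 : dot (psub q ca) (psub p ca) =
     a * dot (psub q ca) (psub cb ca) + b * dot (psub q ca) (psub cc ca)).
  { rewrite Hw. destruct q, ca, cb, cc; unfold dot, padd, pscale, psub; simpl; ring. }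
  assert (Hs : ra <= a * db + b * dc) by nra.
  assert (G : ra * ra <= dot (psub q ca) (psub p ca)) by nra.
  unfold dist. apply pnorm_ge; [lra|]. subst x.
  set (s := 1 - t).
  assert (E3 : dot (psub (padd q (pscale t (psub p q))) ca) (psub (padd q (pscale t (psub p q))) ca)
     = dot (psub p ca) (psub p ca) + 2 * s * (dot (psub q ca) (psub p ca) - dot (psub p ca) (psub p ca))
       + s * s * dot (psub q p) (psub q p)).
  { unfold s; destruct q, p, ca; unfold dot, padd, pscale, psub; simpl; ring. }
  rewrite E3, Hpp. pose proof (dot_nonneg (psub q p)).
  assert (0 < s) by (unfold s; lra). nra.
Qed.

Lemma other_disc ca ra cb rb q p x : 0 < ra -> 0 < rb -> ra + rb < dist cb ca ->
  SI cb rb ca q -> on_circle ca ra p ->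
  on_open_segment q p x -> rb <= dist x cb.
Proof.
  intros Ha Hb Hf S Hp [t [Ht Hx]].
  unfold SI, on_circle in *. rewrite (dist_sym ca cb) in S.
  set (d := dist cb ca) in *.
  assert (Hdd : d * d = dot (psub cb ca) (psub cb ca)) by apply pnorm_sq.
  assert (C1 : dot (psub p ca) (psub cb ca) <= ra * d).
  { rewrite <- Hp. apply cs. }
  assert (C2 : dot (psub cb x) (psub cb ca) <= dist x cb * d).
  { rewrite (dist_sym x cb). apply cs. }
  assert (E : dot (psub cb x) (psub cb ca) =
     (1 - t) * dot (psub q cb) (psub ca cb) + t * (d * d - dot (psub p ca) (psub cb ca))).
  { rewrite Hdd, Hx. destruct q, p, ca, cb; unfold dot, padd, pscale, psub; simpl; ring. }
  assert (0 < d) by lra.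
  assert (rb * d <= dot (psub cb x) (psub cb ca)).
  { rewrite E. assert (rb * d <= d * d - dot (psub p ca) (psub cb ca)) by nra. nra. }
  nra.
Qed.

Theorem theorem1 (ci cj ck : pt) (ri rj rk : R)
  (hri : 0 < ri) (hrj : 0 < rj) (hrk : 0 < rk)
  (hij : discs_disjoint ci ri cj rj)
  (hjk : discs_disjoint cj rj ck rk)
  (hik : discs_disjoint ci ri ck rk)
  (hnc : ~ collinear ci cj ck)
  (q : pt) (hq : feasible ci ri cj rj ck rk q) :
  forall p : pt,
    (objective_arc ci ri cj ck p \/ objective_arc cj rj ci ck p \/
     objective_arc ck rk ci cj p) ->
    forall x : pt, on_open_segment q p x ->
      ~ in_disc_interior ci ri x /\ ~ in_disc_interior cj rj x /\
      ~ in_disc_interior ck rk x.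
Proof.
  intros p Hp x Hx.
  pose proof (disj_far _ _ _ _ hri hrj hij) as Fij.
  pose proof (disj_far _ _ _ _ hrj hrk hjk) as Fjk.
  pose proof (disj_far _ _ _ _ hri hrk hik) as Fik.
  assert (Fji : rj + ri < dist ci cj) by (rewrite dist_sym; lra).
  assert (Fkj : rk + rj < dist cj ck) by (rewrite dist_sym; lra).
  assert (Fki : rk + ri < dist ci ck) by (rewrite dist_sym; lra).
  destruct hq as [S1 [S2 S3]].
  destruct (slab_SI _ _ _ _ _ hri hrj Fij S1) as [Iij Iji].
  destruct (slab_SI _ _ _ _ _ hrj hrk Fjk S2) as [Ijk Ikj].
  destruct (slab_SI _ _ _ _ _ hri hrk Fik S3) as [Iik Iki].
  unfold in_disc_interior.
  destruct Hp as [H|[H|H]]; pose proof (proj1 H) as Hc.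
  - pose proof (own_disc _ _ _ _ _ _ _ hri Iij Iik H Hx).
    pose proof (other_disc _ _ _ _ _ _ _ hri hrj Fij Iji Hc Hx).
    pose proof (other_disc _ _ _ _ _ _ _ hri hrk Fik Iki Hc Hx).
    repeat split; lra.
  - pose proof (own_disc _ _ _ _ _ _ _ hrj Iji Ijk H Hx).
    pose proof (other_disc _ _ _ _ _ _ _ hrj hri Fji Iij Hc Hx).
    pose proof (other_disc _ _ _ _ _ _ _ hrj hrk Fjk Ikj Hc Hx).
    repeat split; lra.
  - pose proof (own_disc _ _ _ _ _ _ _ hrk Iki Ikj H Hx).
    pose proof (other_disc _ _ _ _ _ _ _ hrk hri Fki Iik Hc Hx).
    pose proof (other_disc _ _ _ _ _ _ _ hrk hrj Fkj Ijk Hc Hx).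
    repeat split; lra.
Qed.
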